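(* Let $1\le p<\infty$ and let $\mathbf u,\mathbf v$ be bounded sequences of non-zero scalars such that $\sum_{n=1}^\infty\frac{1}{|u_1\cdots u_n|^p}<\infty$ and $\sum_{n=1}^\infty\frac1{|v_1\cdots v_n|^p}<\infty$. Consider the weighted backward shifts $B_{\mathbf u},B_{\mathbf v}$ on $\ell_p(\mathbb Z_+)$. The following are equivalent: (1) $B_{\mathbf u}$ and $B_{\mathbf v}$ share a non-zero periodic point, i.e. there is $x\ne0$ and $d_1,d_2\in\mathbb N$ with $B_{\mathbf u}^{d_1}x=x=B_{\mathbf v}^{d_2}x$; (2) there exist $d\in\mathbb N$ and $0\le j\le d-1$ such that $u_{1+j}\cdots u_{dm+j}=v_{1+j}\cdots v_{dm+j}$ for all $m\ge1$; (3) there exist $d\in\mathbb N$, $0\le j\le d-1$ and a non-zero scalar $C$ such that $u_1\cdots u_{dm+j}=C\,v_1\cdots v_{dm+j}$ for all $m\ge0$ (an empty product being equal to $1$).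
   Context: $(e_n)_{n\ge0}$ is the canonical basis of $\ell_p(\mathbb Z_+)$ (real or complex), and $B_{\mathbf w}e_0=0$, $B_{\mathbf w}e_n=w_ne_{n-1}$ for $n\ge1$. *)

(* Defs.v *)
From HB Require Import structures.
From mathcomp Require Import all_boot all_order all_algebra.
From mathcomp Require Import all_classical all_reals all_analysis.
From mathcomp Require Import complex.
Set Implicit Arguments. Unset Strict Implicit. Unset Printing Implicit Defensive.
Import Order.TTheory GRing.Theory Num.Theory.
Import numFieldNormedType.Exports.
Local Open Scope ring_scope.

(* Scalars: K (to be instantiated with R or R[i]), with absolute value
   nrm : K -> R (a real-valued modulus).
   Weights w are indexed from 1: only w n for n >= 1 are used (w 0 is ignored). *)

Definition in_lp (R : realType) (K : Type) (nrm : K -> R) (p : R) (x : nat -> K) :=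
  cvgn (series (fun n => nrm (x n) `^ p)).

(* weighted backward shift: B_w e_0 = 0, B_w e_n = w_n e_{n-1},
   i.e. (B_w x)_k = w_{k+1} x_{k+1} *)
Definition bshift (K : nzRingType) (w : nat -> K) (x : nat -> K) : nat -> K :=
  fun k => w k.+1 * x k.+1.

Definition bdd_nonzero_weight (R : realType) (K : nzRingType) (nrm : K -> R)
  (w : nat -> K) :=
  (exists M : R, forall n, (1 <= n)%N -> nrm (w n) <= M) /\
  (forall n, (1 <= n)%N -> w n != 0).

Definition weight_summable (R : realType) (K : nzRingType) (nrm : K -> R) (p : R)
  (w : nat -> K) :=
  cvgn (series (fun n => (nrm (\prod_(1 <= i < n.+2) w i) `^ p)^-1)).

Definition common_periodic (R : realType) (K : nzRingType) (nrm : K -> R) (p : R)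
  (u v : nat -> K) :=
  exists x : nat -> K, in_lp nrm p x /\ x != (fun _ => 0) /\
    exists d1 d2 : nat, (1 <= d1)%N /\ (1 <= d2)%N /\
      iter d1 (bshift u) x = x /\ iter d2 (bshift v) x = x.

Definition cond2 (K : nzRingType) (u v : nat -> K) :=
  exists d j : nat, (1 <= d)%N /\ (j <= d - 1)%N /\
    forall m : nat, (1 <= m)%N ->
      \prod_(1 + j <= i < d * m + j + 1) u i = \prod_(1 + j <= i < d * m + j + 1) v i.

Definition cond3 (K : nzRingType) (u v : nat -> K) :=
  exists (d j : nat) (C : K), (1 <= d)%N /\ (j <= d - 1)%N /\ C != 0 /\
    forall m : nat,
      \prod_(1 <= i < d * m + j + 1) u i = C * \prod_(1 <= i < d * m + j + 1) v i.

Definition thm_for (R : realType) (K : nzRingType) (nrm : K -> R) :=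
  forall (p : R) (u v : nat -> K), 1 <= p ->
    bdd_nonzero_weight nrm u -> bdd_nonzero_weight nrm v ->
    weight_summable nrm p u -> weight_summable nrm p v ->
    (common_periodic nrm p u v <-> cond2 u v) /\ (cond2 u v <-> cond3 u v).

Definition cmod (R : realType) (z : R[i]) : R := ComplexField.Normc.normc z.

(* Main.v *)
Require Import Defs.
From HB Require Import structures.
From mathcomp Require Import all_boot all_order all_algebra.
From mathcomp Require Import all_classical all_reals all_analysis.
From mathcomp Require Import complex zify.
Import Order.TTheory GRing.Theory Num.Theory.
Import numFieldNormedType.Exports.
Local Open Scope ring_scope.
Set Implicit Arguments. Unset Strict Implicit.

Lemma iter_bshift (K : nzRingType) (w x : nat -> K) n k :
  iter n (bshift w) x k = (\prod_(k.+1 <= i < (k + n)%N.+1) w i) * x (k + n)%N.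
Proof.
elim: n k => [|n IH] k; first by rewrite addn0 big_geq // mul1r.
rewrite /= {1}/bshift IH [in RHS]big_ltn; last by lia.
by rewrite mulrA addSn addnS.
Qed.

Lemma iter_mul T (f : T -> T) x d m : iter d f x = x -> iter (d * m) f x = x.
Proof.
move=> H; elim: m => [|m IH]; first by rewrite muln0.
by rewrite mulnS iterD IH H.
Qed.

Lemma prod_neq0 (K : fieldType) (w : nat -> K) a b :
  (forall n, (1 <= n)%N -> w n != 0) -> (1 <= a)%N ->
  \prod_(a <= i < b) w i != 0.
Proof.
move=> Hw Ha; elim: b => [|b IH]; first by rewrite big_geq // oner_neq0.
case: (leqP a b) => h.
  by rewrite big_nat_recr //= mulf_neq0 // Hw //; lia.
by rewrite big_geq ?oner_neq0.
Qed.

Lemma powR_inv (R : realType) (a p : R) : 0 < a -> (a^-1) `^ p = (a `^ p)^-1.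
Proof.
move=> a0.
have h : a `^ p != 0 by rewrite gt_eqF // powR_gt0.
apply: (mulIf h); rewrite -powRM ?invr_ge0 ?ltW // mulVf ?gt_eqF //.
by rewrite powR1 mulVf.
Qed.

Lemma per_formula (K : nzRingType) (w x : nat -> K) d :
  iter d (bshift w) x = x -> forall m k,
  x k = (\prod_(k.+1 <= i < (k + d * m)%N.+1) w i) * x (k + d * m)%N.
Proof. by move=> H m k; rewrite -{1}(iter_mul m H) iter_bshift. Qed.

Lemma one_two (R : realType) (K : fieldType) (nrm : K -> R) p (u v : nat -> K) :
  (forall n, (1 <= n)%N -> u n != 0) -> (forall n, (1 <= n)%N -> v n != 0) ->
  common_periodic nrm p u v -> cond2 u v.
Proof.
move=> uP vP [x [_ [/eqP xn0 [d1 [d2 [h1 [h2 [Hu Hv]]]]]]]].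
set d := (d1 * d2)%N.
have d0 : (0 < d)%N by rewrite muln_gt0 h1 h2.
have Hu' : iter d (bshift u) x = x by exact: iter_mul.
have Hv' : iter d (bshift v) x = x by rewrite /d mulnC; exact: iter_mul.
have [n xn] : exists n, x n != 0.
  apply: contrapT => H; apply: xn0; apply: funext => n; apply/eqP.
  apply/negPn/negP => h; apply: H; exists n; exact: h.
exists d, (n %% d)%N; split => //; split; first by have := ltn_pmod n d0; lia.
set j := (n %% d)%N.
have xj : x j != 0.
  have e : (j + d * (n %/ d))%N = n by rewrite /j [in RHS](divn_eq n d) mulnC addnC.
  have := per_formula Hu' (n %/ d) j; rewrite e => ->.
  by rewrite mulf_neq0 // prod_neq0.
move=> m m1.
have eu := per_formula Hu' m j; have ev := per_formula Hv' m j.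
have xjm : x (j + d * m)%N != 0 by apply: contraNneq xj => h; rewrite eu h mulr0.
move: eu; rewrite {1}ev => /(mulIf xjm) e.
rewrite add1n (_ : (d * m + j + 1 = (j + d * m).+1)%N); last by lia.
by rewrite e.
Qed.

Lemma two_one (R : realType) (K : fieldType) (nrm : K -> R) (p : R) (u v : nat -> K) :
  nrm 0 = 0 -> (forall x, 0 <= nrm x) -> (forall x y, nrm (x * y) = nrm x * nrm y) ->
  (forall x, nrm x^-1 = (nrm x)^-1) -> (forall x, nrm x = 0 -> x = 0) -> 1 <= p ->
  (forall n, (1 <= n)%N -> u n != 0) -> (forall n, (1 <= n)%N -> v n != 0) ->
  weight_summable nrm p u -> cond2 u v -> common_periodic nrm p u v.
Proof.
move=> n0 nge0 nM nV neq0 p1 uP vP Su [d [j [d1 [jd H2]]]].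
have jd' : (j < d)%N by lia.
have Q : forall k, (k %% d)%N = j ->
    \prod_(j.+1 <= i < k.+1) v i = \prod_(j.+1 <= i < k.+1) u i.
  move=> k hk.
  have ek : k = (j + d * (k %/ d))%N by rewrite {1}(divn_eq k d) hk mulnC addnC.
  move: (k %/ d)%N ek => q ->; case: q => [|q]; first by rewrite muln0 addn0 !big_geq.
  have := H2 q.+1 isT.
  rewrite add1n (_ : (d * q.+1 + j + 1 = (j + d * q.+1).+1)%N); last by lia.
  by move=> ->.
pose x k := if (k %% d == j)%N then (\prod_(j.+1 <= i < k.+1) u i)^-1 else 0.
exists x; split; [|split].
- rewrite /in_lp.
  have p0 : p != 0 by rewrite gt_eqF // (lt_le_trans ltr01 p1).
  have npos : forall a b, (1 <= a)%N -> 0 < nrm (\prod_(a <= i < b) u i).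
    move=> a b a1; rewrite lt_neqAle nge0 andbT eq_sym.
    apply/eqP => /neq0 /eqP; apply/negP; exact: prod_neq0.
  set c := nrm (\prod_(1 <= i < j.+1) u i) `^ p.
  set b := fun k => (nrm (\prod_(1 <= i < k.+1) u i) `^ p)^-1.
  have hb : cvgn (series b).
    move: Su; rewrite /weight_summable => Su.
    apply: (cvgP (b 0%N + lim (series (fun n => (nrm (\prod_(1 <= i < n.+2) u i) `^ p)^-1) @ \oo)%classic)).
    rewrite -cvg_shiftS /=.
    have -> : (fun n => series b n.+1) = (fun n => b 0%N + series (fun n => (nrm (\prod_(1 <= i < n.+2) u i) `^ p)^-1) n).
      by apply: funext => n; rewrite !seriesEnat /= big_nat_recl.
    apply: cvgD; [exact: cvg_cst | exact: Su].
  have hcb : cvgn (series (fun k => c * b k)).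
    have := @is_cvg_seriesZ _ _ c hb.
    by congr (cvgn (series _)).
  apply: (series_le_cvg _ _ _ hcb).
  + by move=> k; exact: powR_ge0.
  + by move=> k; rewrite /= mulr_ge0 ?invr_ge0 ?powR_ge0.
  + move=> k; rewrite /x; case: eqP => hk; last first.
      by rewrite n0 powR0 // mulr_ge0 ?invr_ge0 ?powR_ge0.
    have := leq_mod k d; rewrite hk => jk.
    rewrite /= /b /c (big_cat_nat _ (m := 1%N) (n := j.+1) (p := k.+1)) //=.
    rewrite nM powRM ?nge0 // nV powR_inv ?npos // invfM mulrA mulfV ?mul1r //.
    by rewrite gt_eqF // powR_gt0 ?npos.
- apply/eqP => h; have := congr1 (fun f => f j) h.
  rewrite /x /= modn_small // eqxx big_geq // invr1 => /eqP.
  by rewrite oner_eq0.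
- have key : forall w, (forall n, (1 <= n)%N -> w n != 0) ->
      (forall k, (k %% d)%N = j ->
        \prod_(j.+1 <= i < k.+1) w i = \prod_(j.+1 <= i < k.+1) u i) ->
      iter d (bshift w) x = x.
    move=> w wP Qw; apply: funext => k; rewrite iter_bshift /x modnDr.
    case: eqP => hk; last by rewrite mulr0.
    have := leq_mod k d; rewrite hk => jk.
    rewrite -(Qw (k + d)%N); last by rewrite modnDr.
    rewrite [X in _ / X](big_cat_nat _ (n := k.+1)) //=; last by lia.
    rewrite (Qw k) // invfM mulrCA mulfV ?mulr1 //.
    exact: prod_neq0.
  exists d, d; do 2 split => //; split; apply: key => //.
Qed.

Lemma two_three (K : fieldType) (u v : nat -> K) :
  (forall n, (1 <= n)%N -> u n != 0) -> (forall n, (1 <= n)%N -> v n != 0) ->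
  cond2 u v -> cond3 u v.
Proof.
move=> uP vP [d [j [d1 [jd H2]]]].
have pu : \prod_(1 <= i < j.+1) u i != 0 by exact: prod_neq0.
have pv : \prod_(1 <= i < j.+1) v i != 0 by exact: prod_neq0.
exists d, j, (\prod_(1 <= i < j.+1) u i / \prod_(1 <= i < j.+1) v i).
split => //; split => //; split; first by rewrite mulf_neq0 ?invr_neq0.
move=> m.
rewrite !(big_cat_nat _ (m := 1%N) (n := j.+1) (p := (d * m + j + 1)%N)) //=; try lia.
case: m => [|m].
  have E : forall w : nat -> K, \prod_(j.+1 <= i < j.+1) w i = 1 by move=> w; rewrite big_geq.
  by rewrite muln0 add0n addn1 !E !mulr1 divfK.
have := H2 m.+1 isT; rewrite add1n => ->.
by rewrite mulrA divfK.
Qed.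

Lemma three_two (K : fieldType) (u v : nat -> K) :
  (forall n, (1 <= n)%N -> u n != 0) -> (forall n, (1 <= n)%N -> v n != 0) ->
  cond3 u v -> cond2 u v.
Proof.
move=> uP vP [d [j [C [d1 [jd [C0 H3]]]]]].
have pv : \prod_(1 <= i < j.+1) v i != 0 by exact: prod_neq0.
exists d, j; split => //; split => // m m1.
have h0 := H3 0%N; rewrite muln0 add0n addn1 in h0.
have := H3 m.
rewrite !(big_cat_nat _ (m := 1%N) (n := j.+1) (p := (d * m + j + 1)%N)) //=; try lia.
rewrite h0 [RHS]mulrA => /(mulfI (mulf_neq0 C0 pv)).
by rewrite add1n.
Qed.

Lemma main_gen (R : realType) (K : fieldType) (nrm : K -> R) :
  nrm 0 = 0 -> (forall x, 0 <= nrm x) -> (forall x y, nrm (x * y) = nrm x * nrm y) ->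
  (forall x, nrm x^-1 = (nrm x)^-1) -> (forall x, nrm x = 0 -> x = 0) ->
  thm_for nrm.
Proof.
move=> n0 nge0 nM nV neq0 p u v p1 [_ uP] [_ vP] Su Sv; split; split.
- exact: one_two.
- exact: two_one.
- exact: two_three.
- exact: three_two.
Qed.

Unset Implicit Arguments.

Theorem theorem4p2 (R : realType) :
  thm_for (K := R) (fun x : R => `|x|) /\ thm_for (@cmod R).
Proof.
split; apply: main_gen.
- exact: normr0.
- exact: normr_ge0.
- exact: normrM.
- exact: normfV.
- by move=> x /eqP; rewrite normr_eq0 => /eqP.
- exact: ComplexField.Normc.normc0.
- by move=> [a b]; rewrite /cmod /=; exact: sqrtr_ge0.
- exact: ComplexField.Normc.normcM.
- exact: ComplexField.Normc.normcV.
- exact: ComplexField.Normc.eq0_normc.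
Qed.
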